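(* Let $\alpha\ge\tfrac12$. Define $g_1=\frac1{\omega_1}\mathbf{1}_{[0,1)}*_\alpha\mathbf{1}_{[0,2]}$ and, for $n\ge2$, $g_n=\frac1{\omega_1}\mathbf{1}_{[0,1)}*_\alpha\mathbf{1}_{[n-2,n+1]}$. Then for every $n\ge1$, $g_n(x)=1$ for all $x\in[n-1,n)$.
   Context: Fix $\alpha\geq\tfrac12$. The Bessel–Kingman hypergroup is $(\mathbb{R}_+,*_\alpha)$ with Haar measure $\omega_\alpha(dz)=z^{2\alpha+1}dz$ and, for $x,y>0$, $\varepsilon_x*_\alpha\varepsilon_y(f)=\int_{|x-y|}^{x+y}K_\alpha(x,y,z)f(z)z^{2\alpha+1}dz$ with $K_\alpha(x,y,z)=C_\Gamma\frac{[(z^2-(x-y)^2)((x+y)^2-z^2)]^{\alpha-1/2}}{(xyz)^{2\alpha}}$, $C_\Gamma=\frac{\Gamma(\alpha+1)}{\Gamma(1/2)\Gamma(\alpha+1/2)2^{2\alpha-1}}$; $\varepsilon_0$ is the identity; $\varepsilon_x*_\alpha\varepsilon_y$ is a probability measure. Translation: $\tau_xf(y)=\varepsilon_x*_\alpha\varepsilon_y(f)$; convolution of functions: $f_1*_\alpha f_2(x)=\int_{\mathbb{R}_+}f_1(y)\,\tau_xf_2(y)\,d\omega_\alpha(y)$. $\omega_1=\omega_\alpha([0,1))$. *)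

(* Defs.v *)
From Stdlib Require Import Reals Lra ClassicalEpsilon.
Open Scope R_scope.

(* Real power with the conventions a^b = exp(b ln a) for a > 0,
   0^0 = 1, and 0 otherwise (only used with b >= 0). *)
Definition rpow (a b : R) : R :=
  if Rlt_dec 0 a then Rpower a b
  else if Req_dec_T b 0 then 1 else 0.

(* Total Riemann integral on [a,b]: the Riemann integral when f is
   Riemann integrable on [a,b], and 0 otherwise. *)
Definition Int (f : R -> R) (a b : R) : R :=
  match excluded_middle_informative (exists _ : Riemann_integrable f a b, True) with
  | left H => RiemannInt (proj1_sig (constructive_indefinite_description _ H))
  | right _ => 0
  end.

Definition improper_0_inf (f : R -> R) (L : R) : Prop :=
  forall eps, 0 < eps -> exists d, 0 < d /\ exists M,
    forall a T, 0 < a < d -> M < T -> Rabs (Int f a T - L) < eps.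

Definition IntR_plus (f : R -> R) : R :=
  epsilon (inhabits 0) (fun L => improper_0_inf f L).

Definition Gamma (s : R) : R :=
  IntR_plus (fun t => rpow t (s - 1) * exp (- t)).

Definition CGamma (alpha : R) : R :=
  Gamma (alpha + 1) / (Gamma (1/2) * Gamma (alpha + 1/2) * rpow 2 (2*alpha - 1)).

Definition Kker (alpha x y z : R) : R :=
  CGamma alpha *
  rpow ((z^2 - (x - y)^2) * ((x + y)^2 - z^2)) (alpha - 1/2)
  / rpow (x * y * z) (2 * alpha).

(* Generalized translation: tau_x f (y) = (eps_x *_alpha eps_y)(f),
   with eps_0 the identity. *)
Definition tau (alpha : R) (f : R -> R) (x y : R) : R :=
  if Req_dec_T x 0 then f y
  else if Req_dec_T y 0 then f x
  else Int (fun z => Kker alpha x y z * f z * rpow z (2 * alpha + 1))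
           (Rabs (x - y)) (x + y).

Definition conv (alpha : R) (f1 f2 : R -> R) (x : R) : R :=
  IntR_plus (fun y => f1 y * tau alpha f2 x y * rpow y (2 * alpha + 1)).

Definition omega1 (alpha : R) : R :=
  Int (fun z => rpow z (2 * alpha + 1)) 0 1.

Definition ind_co (a b y : R) : R :=
  if Rle_dec a y then (if Rlt_dec y b then 1 else 0) else 0.
Definition ind_cc (a b y : R) : R :=
  if Rle_dec a y then (if Rle_dec y b then 1 else 0) else 0.

Definition g (alpha : R) (n : nat) : R -> R :=
  match n with
  | 1%nat => conv alpha (fun y => / omega1 alpha * ind_co 0 1 y) (ind_cc 0 2)
  | _ => conv alpha (fun y => / omega1 alpha * ind_co 0 1 y)
                    (ind_cc (INR n - 2) (INR n + 1))
  end.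

(* Main.v *)
From Pilot Require Import Defs.
From Stdlib Require Import Reals.
From Stdlib Require Import Lra Lia ClassicalEpsilon Classical.
From Coquelicot Require Import Coquelicot.
Import Pilot.Defs.
Open Scope R_scope.

Lemma Int_RInt f a b : ex_RInt f a b -> Int f a b = RInt f a b.
Proof.
  intros H. unfold Int.
  destruct excluded_middle_informative as [H1|H1].
  - symmetry; apply RInt_Reals.
  - exfalso; apply H1. exists (ex_RInt_Reals_0 _ _ _ H). exact I.
Qed.

Lemma improper_unique f L1 L2 :
  improper_0_inf f L1 -> improper_0_inf f L2 -> L1 = L2.
Proof.
  intros H1 H2.
  destruct (Req_dec L1 L2) as [E|N]; auto. exfalso.
  set (e := Rabs (L1 - L2) / 4).
  assert (He : 0 < e) by (unfold e; assert (0 < Rabs (L1 - L2)) by (apply Rabs_pos_lt; lra); lra).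
  destruct (H1 e He) as [d1 [Hd1 [M1 HM1]]].
  destruct (H2 e He) as [d2 [Hd2 [M2 HM2]]].
  set (a := Rmin d1 d2 / 2). set (T := Rmax M1 M2 + 1).
  assert (Ha1 : 0 < a < d1) by (unfold a; pose proof (Rmin_l d1 d2); pose proof (Rmin_glb_lt d1 d2 0 Hd1 Hd2); lra).
  assert (Ha2 : 0 < a < d2) by (unfold a; pose proof (Rmin_r d1 d2); pose proof (Rmin_glb_lt d1 d2 0 Hd1 Hd2); lra).
  assert (T1 : M1 < T) by (unfold T; pose proof (Rmax_l M1 M2); lra).
  assert (T2 : M2 < T) by (unfold T; pose proof (Rmax_r M1 M2); lra).
  specialize (HM1 a T Ha1 T1). specialize (HM2 a T Ha2 T2).
  assert (Rabs (L1 - L2) <= Rabs (Int f a T - L1) + Rabs (Int f a T - L2)).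
  { replace (L1 - L2) with (-(Int f a T - L1) + (Int f a T - L2)) by ring.
    eapply Rle_trans; [apply Rabs_triang|]. rewrite Rabs_Ropp. lra. }
  unfold e in *. lra.
Qed.

Lemma IntR_plus_eq f L : improper_0_inf f L -> IntR_plus f = L.
Proof.
  intros H. unfold IntR_plus.
  apply improper_unique with f; auto.
  apply epsilon_spec. exists L; exact H.
Qed.

Lemma cont_eps (f : R -> R) x :
  (forall eps, 0 < eps -> exists d, 0 < d /\ forall y, Rabs (y - x) < d -> Rabs (f y - f x) < eps) ->
  continuous f x.
Proof.
  intros H. apply continuity_pt_filterlim.
  intros eps Heps. destruct (H eps Heps) as [d [Hd H']].
  exists d; split; auto. intros y [_ Hy]. apply H'. exact Hy.
Qed.

Lemma deriv_cont (f : R -> R) x l : derivable_pt_lim f x l -> continuous f x.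
Proof.
  intros H. apply continuity_pt_filterlim.
  apply derivable_continuous_pt. exists l. exact H.
Qed.

Lemma rpow_pos a b : 0 < a -> rpow a b = Rpower a b.
Proof. intros H; unfold rpow; destruct (Rlt_dec 0 a); [auto|lra]. Qed.
Lemma rpow_nonpos a b : a <= 0 -> b <> 0 -> rpow a b = 0.
Proof. intros H H'; unfold rpow; destruct (Rlt_dec 0 a); [lra|].
  destruct (Req_dec_T b 0); [contradiction|auto]. Qed.
Lemma rpow_0r a : rpow a 0 = 1.
Proof. unfold rpow; destruct (Rlt_dec 0 a). apply Rpower_O; auto.
  destruct (Req_dec_T 0 0); [auto|congruence]. Qed.

Lemma Rpower_pos a b : 0 < Rpower a b.
Proof. unfold Rpower; apply exp_pos. Qed.

Lemma cont_rpow q w : 0 <= q -> continuous (fun w => rpow w q) w.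
Proof.
  intros Hq. destruct (Req_dec q 0) as [E|Nq].
  - subst. apply continuous_ext with (fun _ => 1). intros; rewrite rpow_0r; auto.
    apply continuous_const.
  - assert (Hq' : 0 < q) by lra.
    destruct (Rlt_dec 0 w) as [Hw|Hw].
    + apply continuous_ext_loc with (fun w => Rpower w q).
      * exists (mkposreal w Hw). intros y Hy. 
        change (Rabs (y - w) < w) in Hy. rewrite rpow_pos; auto.
        apply Rabs_def2 in Hy; lra.
      * eapply deriv_cont. apply derivable_pt_lim_power; auto.
    + destruct (Rlt_dec w 0) as [Hw'|Hw'].
      * apply continuous_ext_loc with (fun _ => 0).
        -- exists (mkposreal (-w) ltac:(lra)). intros y Hy.
           change (Rabs (y - w) < -w) in Hy. apply Rabs_def2 in Hy.
           rewrite rpow_nonpos; auto; lra.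
        -- apply continuous_const.
      * assert (w = 0) by lra. subst w.
        apply cont_eps. intros eps Heps.
        exists (Rpower eps (/ q)). split; [apply Rpower_pos|].
        intros y Hy. rewrite (rpow_nonpos 0) by lra. rewrite Rminus_0_r.
        rewrite Rminus_0_r in Hy.
        destruct (Rlt_dec 0 y) as [Hy0|Hy0].
        * rewrite rpow_pos by auto. rewrite Rabs_pos_eq by (left; apply Rpower_pos).
          rewrite Rabs_pos_eq in Hy by lra.
          replace eps with (Rpower (Rpower eps (/ q)) q).
          apply Rlt_Rpower_l; auto.
          rewrite Rpower_mult. rewrite Rinv_l by lra. apply Rpower_1; auto.
        * rewrite rpow_nonpos by lra. rewrite Rabs_R0; auto.
Qed.

Lemma ex_RInt_cont (f : R -> R) a b :
  (forall z, Rmin a b <= z <= Rmax a b -> continuous f z) -> ex_RInt f a b.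
Proof. apply (ex_RInt_continuous (V:=R_CompleteNormedModule)). Qed.

Lemma RInt_Chasles_R (f : R -> R) a b c :
  ex_RInt f a b -> ex_RInt f b c -> RInt f a b + RInt f b c = RInt f a c.
Proof. apply (RInt_Chasles (V:=R_CompleteNormedModule)). Qed.

Lemma ex_derive_cont (f : R -> R) x : ex_derive f x -> continuous f x.
Proof. apply (ex_derive_continuous (K:=R_AbsRing) (V:=R_NormedModule)). Qed.

Lemma RInt_deriv (f df : R -> R) a b :
  (forall x, Rmin a b <= x <= Rmax a b -> is_derive f x (df x)) ->
  (forall x, Rmin a b <= x <= Rmax a b -> continuous df x) ->
  RInt df a b = f b - f a.
Proof.
  intros H1 H2. apply is_RInt_unique.
  apply (is_RInt_derive (V:=R_CompleteNormedModule)); auto.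
Qed.

Lemma is_derive_Rpower t s : 0 < t -> is_derive (fun t => Rpower t s) t (s * Rpower t (s - 1)).
Proof. intros; apply is_derive_Reals; apply derivable_pt_lim_power; auto. Qed.

Lemma Rpower_1_l s : Rpower 1 s = 1.
Proof. unfold Rpower; rewrite ln_1, Rmult_0_r; apply exp_0. Qed.

Lemma RInt_lin (f g : R -> R) a b c : ex_RInt f a b -> ex_RInt g a b ->
  RInt (fun t => f t - c * g t) a b = RInt f a b - c * RInt g a b.
Proof.
  intros Hf Hg.
  rewrite (RInt_minus (V:=R_CompleteNormedModule) f (fun t => c * g t)); auto.
  - rewrite (RInt_scal (V:=R_CompleteNormedModule) g); auto.
  - apply (ex_RInt_scal (V:=R_NormedModule) g); auto.
Qed.

Lemma RInt_lin2 (f g : R -> R) a b c d : ex_RInt f a b -> ex_RInt g a b ->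
  RInt (fun t => c * f t + d * g t) a b = c * RInt f a b + d * RInt g a b.
Proof.
  intros Hf Hg.
  rewrite (RInt_plus (V:=R_CompleteNormedModule) (fun t => c * f t) (fun t => d * g t)); auto.
  - rewrite (RInt_scal (V:=R_CompleteNormedModule) g); auto.
    rewrite (RInt_scal (V:=R_CompleteNormedModule) f); auto.
  - apply (ex_RInt_scal (V:=R_NormedModule) f); auto.
  - apply (ex_RInt_scal (V:=R_NormedModule) g); auto.
Qed.

Lemma ex_RInt_lin2 (f g : R -> R) a b c d : ex_RInt f a b -> ex_RInt g a b ->
  ex_RInt (fun t => c * f t + d * g t) a b.
Proof.
  intros Hf Hg.
  apply (ex_RInt_plus (V:=R_NormedModule) (fun t => c * f t) (fun t => d * g t)).
  - apply (ex_RInt_scal (V:=R_NormedModule) f); auto.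
  - apply (ex_RInt_scal (V:=R_NormedModule) g); auto.
Qed.

Lemma exp_pred s x : 0 < x -> exp ((s - 1) * ln x) = exp (s * ln x) / x.
Proof.
  intros Hx. replace ((s - 1) * ln x) with (s * ln x + - ln x) by ring.
  rewrite exp_plus, exp_Ropp, exp_ln by auto. reflexivity.
Qed.

Lemma pos_ex (f : R -> R) a b : (forall t, 0 < t -> continuous f t) -> 0 < a -> 0 < b -> ex_RInt f a b.
Proof.
  intros Hc Ha Hb. apply ex_RInt_cont. intros z Hz. apply Hc.
  pose proof (Rmin_glb_lt a b 0 Ha Hb). lra.
Qed.

Lemma RInt_split3 (f : R -> R) a b c d : ex_RInt f a b -> ex_RInt f b c -> ex_RInt f c d ->
  RInt f a d = RInt f a b + RInt f b c + RInt f c d.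
Proof.
  intros H1 H2 H3.
  rewrite <- (RInt_Chasles_R f a c d); [|eapply ex_RInt_Chasles; eauto|auto].
  rewrite <- (RInt_Chasles_R f a b c); auto.
Qed.

Lemma improper_exists f B :
  (forall t, 0 < t -> continuous f t) -> (forall t, 0 < t -> 0 <= f t) ->
  (forall a T, 0 < a -> a <= T -> RInt f a T <= B) ->
  exists L, improper_0_inf f L /\ (forall a T, 0 < a -> a <= T -> RInt f a T <= L).
Proof.
  intros Hc Hp HB.
  set (E := fun v => exists a T, 0 < a /\ a <= T /\ v = RInt f a T).
  assert (Hb : bound E) by (exists B; intros v [a [T [Ha [HaT ->]]]]; apply HB; auto).
  assert (He : exists v, E v) by (exists (RInt f 1 1); exists 1, 1; repeat split; lra).
  destruct (completeness E Hb He) as [L [HL1 HL2]].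
  assert (Hle : forall a T, 0 < a -> a <= T -> RInt f a T <= L)
    by (intros a T Ha HaT; apply HL1; exists a, T; auto).
  exists L; split; auto.
  intros eps Heps.
  destruct (classic (exists v, E v /\ L - eps < v)) as [[v [[a0 [T0 [Ha0 [HaT0 ->]]]] Hv]]|Hn].
  - exists a0; split; auto. exists T0. intros a T Ha HT.
    assert (ex_RInt f a T) by (apply pos_ex; auto; lra).
    rewrite Int_RInt by auto.
    assert (RInt f a T <= L) by (apply Hle; lra).
    rewrite (RInt_split3 f a a0 T0 T) by (apply pos_ex; auto; lra).
    assert (0 <= RInt f a a0) by (apply RInt_ge_0; [lra| apply pos_ex; auto; lra| intros; apply Hp; lra]).
    assert (0 <= RInt f T0 T) by (apply RInt_ge_0; [lra| apply pos_ex; auto; lra| intros; apply Hp; lra]).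
    rewrite (RInt_split3 f a a0 T0 T) in H0 by (apply pos_ex; auto; lra).
    apply Rabs_def1; lra.
  - exfalso. assert (L <= L - eps); [|lra].
    apply HL2. intros v Hv. apply Rnot_lt_le. intros Hlt. apply Hn. exists v; auto.
Qed.

Lemma improper_le_comb f g h Lf Lg Lh c1 c2 :
  0 <= c1 -> 0 <= c2 ->
  improper_0_inf f Lf -> improper_0_inf g Lg -> improper_0_inf h Lh ->
  (forall a T, 0 < a < 1 -> 1 < T -> Int f a T <= c1 * Int g a T + c2 * Int h a T) ->
  Lf <= c1 * Lg + c2 * Lh.
Proof.
  intros H1 H2 Hf Hg Hh Hle.
  apply Rnot_lt_le; intros Hlt.
  set (e := (Lf - (c1 * Lg + c2 * Lh)) / (2 * (1 + c1 + c2))).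
  assert (He : 0 < e) by (unfold e; apply Rdiv_lt_0_compat; lra).
  destruct (Hf e He) as [d1 [Hd1 [M1 HM1]]].
  destruct (Hg e He) as [d2 [Hd2 [M2 HM2]]].
  destruct (Hh e He) as [d3 [Hd3 [M3 HM3]]].
  set (a := Rmin 1 (Rmin d1 (Rmin d2 d3)) / 2). set (T := Rmax 1 (Rmax M1 (Rmax M2 M3)) + 1).
  assert (Hm := Rmin_glb_lt d2 d3 0 Hd2 Hd3).
  assert (Hm2 := Rmin_glb_lt d1 _ 0 Hd1 Hm).
  assert (Hm3 := Rmin_glb_lt 1 _ 0 Rlt_0_1 Hm2).
  pose proof (Rmin_l 1 (Rmin d1 (Rmin d2 d3))). pose proof (Rmin_r 1 (Rmin d1 (Rmin d2 d3))).
  pose proof (Rmin_l d1 (Rmin d2 d3)). pose proof (Rmin_r d1 (Rmin d2 d3)).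
  pose proof (Rmin_l d2 d3). pose proof (Rmin_r d2 d3).
  pose proof (Rmax_l 1 (Rmax M1 (Rmax M2 M3))). pose proof (Rmax_r 1 (Rmax M1 (Rmax M2 M3))).
  pose proof (Rmax_l M1 (Rmax M2 M3)). pose proof (Rmax_r M1 (Rmax M2 M3)).
  pose proof (Rmax_l M2 M3). pose proof (Rmax_r M2 M3).
  specialize (HM1 a T ltac:(unfold a; lra) ltac:(unfold T; lra)).
  specialize (HM2 a T ltac:(unfold a; lra) ltac:(unfold T; lra)).
  specialize (HM3 a T ltac:(unfold a; lra) ltac:(unfold T; lra)).
  specialize (Hle a T ltac:(unfold a; lra) ltac:(unfold T; lra)).
  apply Rabs_def2 in HM1. apply Rabs_def2 in HM2. apply Rabs_def2 in HM3.
  assert (c1 * Int g a T <= c1 * (Lg + e)) by (apply Rmult_le_compat_l; lra).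
  assert (c2 * Int h a T <= c2 * (Lh + e)) by (apply Rmult_le_compat_l; lra).
  assert (Lf - e < c1 * Lg + c2 * Lh + (c1 + c2) * e) by lra.
  unfold e in H15. 
  assert (Lf - (c1 * Lg + c2 * Lh) < (1 + c1 + c2) * ((Lf - (c1 * Lg + c2 * Lh)) / (2 * (1 + c1 + c2)))) by lra.
  replace ((1 + c1 + c2) * ((Lf - (c1 * Lg + c2 * Lh)) / (2 * (1 + c1 + c2)))) with ((Lf - (c1 * Lg + c2 * Lh))/2) in H16 by (field; lra).
  lra.
Qed.

Definition gi s t := rpow t (s - 1) * exp (- t).

Lemma Gamma_gi s : Gamma s = IntR_plus (gi s).
Proof. reflexivity. Qed.

Lemma gi_pos s t : 0 < t -> gi s t = Rpower t (s - 1) * exp (- t).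
Proof. intros; unfold gi; rewrite rpow_pos; auto. Qed.

Lemma gi_cont s t : 0 < t -> continuous (gi s) t.
Proof.
  intros Ht. apply continuous_ext_loc with (fun t => Rpower t (s - 1) * exp (- t)).
  - exists (mkposreal t Ht). intros y Hy. change (Rabs (y - t) < t) in Hy.
    apply Rabs_def2 in Hy. rewrite gi_pos; auto; lra.
  - apply ex_derive_cont. unfold Rpower. auto_derive. lra.
Qed.

Lemma gi_ge0 s t : 0 < t -> 0 < gi s t.
Proof. intros; rewrite gi_pos; auto. apply Rmult_lt_0_compat; [apply Rpower_pos|apply exp_pos]. Qed.

Lemma ln_le_sqrt t : 1 <= t -> ln t <= 2 * sqrt t.
Proof.
  intros Ht.
  assert (Hs : 0 < sqrt t) by (apply sqrt_lt_R0; lra).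
  replace (ln t) with (ln (sqrt t * sqrt t)) by (rewrite sqrt_sqrt; auto; lra).
  rewrite ln_mult; auto.
  pose proof (exp_ineq1_le (ln (sqrt t))). rewrite exp_ln in H; auto. lra.
Qed.

Lemma exp_le x y : x <= y -> exp x <= exp y.
Proof. intros H; destruct (Req_dec x y); [subst; lra|left; apply exp_increasing; lra]. Qed.

Lemma pow_bound c t : 1 <= t -> Rpower t c <= exp (t / 2 + 2 * c ^ 2).
Proof.
  intros Ht. unfold Rpower. apply exp_le.
  assert (Hl : 0 <= ln t) by (rewrite <- ln_1; apply ln_le; lra).
  destruct (Rle_dec c 0) as [Hc|Hc].
  - nra.
  - pose proof (ln_le_sqrt t Ht).
    assert (Hs := sqrt_sqrt t ltac:(lra)).
    assert (c * ln t <= c * (2 * sqrt t)) by (apply Rmult_le_compat_l; lra).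
    pose proof (pow2_ge_0 (sqrt t - 2 * c)). nra.
Qed.

Lemma gi_bound1 s t : 1 <= t -> gi s t <= exp (2 * (s - 1) ^ 2) * exp (- t / 2).
Proof.
  intros Ht. rewrite gi_pos by lra.
  pose proof (pow_bound (s - 1) t Ht).
  replace (exp (2 * (s - 1) ^ 2) * exp (- t / 2)) with (exp (t / 2 + 2 * (s - 1) ^ 2) * exp (- t)).
  apply Rmult_le_compat_r; [left; apply exp_pos|auto].
  rewrite <- !exp_plus. f_equal. field.
Qed.

Lemma int01 s a : 0 < s -> 0 < a <= 1 -> RInt (gi s) a 1 <= 1 / s.
Proof.
  intros Hs Ha.
  assert (Hc : forall t, 0 < t -> continuous (fun t => Rpower t (s - 1)) t)
    by (intros t Ht; apply ex_derive_cont; exists ((s - 1) * Rpower t (s - 1 - 1)); apply is_derive_Rpower; auto).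
  apply Rle_trans with (RInt (fun t => Rpower t (s - 1)) a 1).
  - apply RInt_le; try lra; try (apply pos_ex; auto; try lra; apply gi_cont).
    intros x Hx. rewrite gi_pos by lra.
    assert (exp (- x) <= 1) by (rewrite <- exp_0; apply exp_le; lra).
    pose proof (Rpower_pos x (s - 1)). nra.
  - rewrite (RInt_deriv (fun t => / s * Rpower t s)).
    + rewrite Rpower_1_l. pose proof (Rpower_pos a s). apply Rmult_le_reg_l with s; auto.
      field_simplify; lra.
    + intros x Hx. rewrite Rmin_left, Rmax_right in Hx by lra.
      replace (Rpower x (s - 1)) with (/ s * (s * Rpower x (s - 1))) by (field; lra).
      apply (is_derive_scal (fun t => Rpower t s)). apply is_derive_Rpower; lra.
    + intros x Hx. rewrite Rmin_left, Rmax_right in Hx by lra. apply Hc; lra.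
Qed.

Lemma int1T s T : 1 <= T -> RInt (gi s) 1 T <= 2 * exp (2 * (s - 1) ^ 2).
Proof.
  intros HT. set (K := exp (2 * (s - 1) ^ 2)).
  assert (HK : 0 < K) by apply exp_pos.
  apply Rle_trans with (RInt (fun t => K * exp (- t / 2)) 1 T).
  - apply RInt_le; auto; try (apply pos_ex; auto; try lra; try apply gi_cont).
    + intros; apply ex_derive_cont; auto_derive; auto.
    + intros x Hx. apply gi_bound1; lra.
  - rewrite (RInt_deriv (fun t => - 2 * K * exp (- t / 2))).
    + assert (0 < exp (- (1) / 2)) by apply exp_pos.
      assert (exp (- (1) / 2) <= 1) by (apply Rle_trans with (exp 0); [apply exp_le; lra| rewrite exp_0; lra]).
      assert (0 < exp (- T / 2)) by apply exp_pos. nra.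
    + intros x Hx. auto_derive; auto. unfold Rdiv. set (E := exp _). field.
    + intros x Hx; apply ex_derive_cont; auto_derive; auto.
Qed.

Lemma gamma_bound s a T : 0 < s -> 0 < a -> a <= T ->
  RInt (gi s) a T <= 1 / s + 2 * exp (2 * (s - 1) ^ 2).
Proof.
  intros Hs Ha HaT.
  set (a' := Rmin a 1). set (T' := Rmax T 1).
  assert (Ha' : 0 < a' <= a /\ a' <= 1) by (unfold a'; pose proof (Rmin_l a 1); pose proof (Rmin_r a 1); pose proof (Rmin_glb_lt a 1 0 Ha Rlt_0_1); lra).
  assert (HT' : T <= T' /\ 1 <= T') by (unfold T'; pose proof (Rmax_l T 1); pose proof (Rmax_r T 1); lra).
  assert (Hex : forall u v, 0 < u -> 0 < v -> ex_RInt (gi s) u v) by (intros; apply pos_ex; auto; intros; apply gi_cont; auto).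
  assert (RInt (gi s) a T <= RInt (gi s) a' T').
  { rewrite (RInt_split3 (gi s) a' a T T') by (apply Hex; lra).
    assert (0 <= RInt (gi s) a' a) by (apply RInt_ge_0; [lra|apply Hex; lra|intros; left; apply gi_ge0; lra]).
    assert (0 <= RInt (gi s) T T') by (apply RInt_ge_0; [lra|apply Hex; lra|intros; left; apply gi_ge0; lra]).
    lra. }
  rewrite <- (RInt_Chasles_R (gi s) a' 1 T') in H by (apply Hex; lra).
  pose proof (int01 s a' Hs ltac:(lra)). pose proof (int1T s T' ltac:(lra)). lra.
Qed.

Lemma Gamma_spec s : 0 < s ->
  improper_0_inf (gi s) (Gamma s) /\ (forall a T, 0 < a -> a <= T -> RInt (gi s) a T <= Gamma s).
Proof.
  intros Hs.
  destruct (improper_exists (gi s) (1 / s + 2 * exp (2 * (s - 1) ^ 2))) as [L [H1 H2]].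
  - apply gi_cont.
  - intros; left; apply gi_ge0; auto.
  - intros; apply gamma_bound; auto.
  - rewrite Gamma_gi. rewrite (IntR_plus_eq _ L H1). auto.
Qed.

Lemma Gamma_pos s : 0 < s -> 0 < Gamma s.
Proof.
  intros Hs. destruct (Gamma_spec s Hs) as [_ H].
  apply Rlt_le_trans with (RInt (gi s) 1 2); [|apply H; lra].
  apply RInt_gt_0; [lra|intros; apply gi_ge0; lra|intros; apply gi_cont; lra].
Qed.

Lemma RInt_gi_rec s a T : 0 < s -> 0 < a -> 0 < T ->
  RInt (gi (s + 1)) a T = s * RInt (gi s) a T + (Rpower a s * exp (- a) - Rpower T s * exp (- T)).
Proof.
  intros Hs Ha HT.
  assert (Hex : forall u, ex_RInt (gi u) a T) by (intros; apply pos_ex; auto; intros; apply gi_cont; auto).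
  assert (RInt (fun t => gi (s + 1) t - s * gi s t) a T = RInt (gi (s + 1)) a T - s * RInt (gi s) a T)
    by (apply RInt_lin; auto).
  rewrite (RInt_deriv (fun t => - (Rpower t s * exp (- t)))) in H.
  - lra.
  - intros x Hx. assert (0 < x) by (pose proof (Rmin_glb_lt a T 0 Ha HT); lra).
    rewrite !gi_pos by auto. unfold Rpower. auto_derive; auto.
    replace (s + 1 - 1) with s by ring. rewrite exp_pred by auto.
    field. lra.
  - intros x Hx. assert (0 < x) by (pose proof (Rmin_glb_lt a T 0 Ha HT); lra).
    apply (continuous_minus (K:=R_AbsRing) (V:=R_NormedModule) (gi (s+1)) (fun t => s * gi s t)).
    + apply gi_cont; auto.
    + apply (continuous_mult (K:=R_AbsRing) (fun _ => s) (gi s)); [apply continuous_const| apply gi_cont; auto].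
Qed.

Lemma Rpower_small s eps a : 0 < s -> 0 < eps -> 0 < a < Rpower eps (/ s) -> Rpower a s < eps.
Proof.
  intros Hs He Ha.
  replace eps with (Rpower (Rpower eps (/ s)) s).
  apply Rlt_Rpower_l; auto.
  rewrite Rpower_mult, Rinv_l by lra. apply Rpower_1; auto.
Qed.

Lemma tail_small s eps T : 0 < eps -> 1 <= T -> 2 * (2 * s ^ 2 - ln eps) < T ->
  Rpower T s * exp (- T) < eps.
Proof.
  intros He HT HT2.
  apply Rle_lt_trans with (exp (T / 2 + 2 * s ^ 2) * exp (- T)).
  - apply Rmult_le_compat_r; [left; apply exp_pos|apply pow_bound; auto].
  - rewrite <- exp_plus. rewrite <- (exp_ln eps) by auto. apply exp_increasing. lra.
Qed.

Lemma Gamma_rec s : 0 < s -> Gamma (s + 1) = s * Gamma s.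
Proof.
  intros Hs. rewrite (Gamma_gi (s + 1)). apply IntR_plus_eq.
  destruct (Gamma_spec s Hs) as [Hi _].
  intros eps Heps.
  destruct (Hi (eps / (3 * (s + 1)))) as [d1 [Hd1 [M1 HM1]]].
  { apply Rdiv_lt_0_compat; lra. }
  set (e3 := eps / 3).
  assert (He3 : 0 < e3) by (unfold e3; lra).
  exists (Rmin d1 (Rpower e3 (/ s))). split.
  { apply Rmin_glb_lt; auto; apply Rpower_pos. }
  exists (Rmax M1 (Rmax 1 (2 * (2 * s ^ 2 - ln e3)))).
  intros a T Ha HT.
  pose proof (Rmin_l d1 (Rpower e3 (/ s))). pose proof (Rmin_r d1 (Rpower e3 (/ s))).
  pose proof (Rmax_l M1 (Rmax 1 (2 * (2 * s ^ 2 - ln e3)))).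
  pose proof (Rmax_r M1 (Rmax 1 (2 * (2 * s ^ 2 - ln e3)))).
  pose proof (Rmax_l 1 (2 * (2 * s ^ 2 - ln e3))). pose proof (Rmax_r 1 (2 * (2 * s ^ 2 - ln e3))).
  specialize (HM1 a T ltac:(lra) ltac:(lra)).
  assert (Hex : forall u, ex_RInt (gi u) a T) by (intros; apply pos_ex; try lra; intros; apply gi_cont; auto).
  rewrite Int_RInt in * by auto.
  rewrite RInt_gi_rec by lra.
  assert (Ha1 : Rpower a s < e3) by (apply Rpower_small; auto; lra).
  assert (Ha2 : Rpower a s * exp (- a) <= Rpower a s).
  { pose proof (Rpower_pos a s). assert (exp (- a) <= 1) by (apply Rle_trans with (exp 0); [apply exp_le; lra|rewrite exp_0; lra]). nra. }
  assert (Ha3 : 0 < Rpower a s * exp (- a)) by (apply Rmult_lt_0_compat; [apply Rpower_pos|apply exp_pos]).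
  assert (HT1 : Rpower T s * exp (- T) < e3) by (apply tail_small; auto; lra).
  assert (HT3 : 0 < Rpower T s * exp (- T)) by (apply Rmult_lt_0_compat; [apply Rpower_pos|apply exp_pos]).
  apply Rabs_def2 in HM1. destruct HM1 as [HM1a HM1b].
  assert (s * (eps / (3 * (s + 1))) <= e3).
  { unfold e3. apply Rmult_le_reg_r with (3 * (s + 1)); [lra|]. field_simplify; nra. }
  assert (s * (RInt (gi s) a T - Gamma s) < s * (eps / (3 * (s + 1)))) by (apply Rmult_lt_compat_l; lra).
  assert (- (s * (eps / (3 * (s + 1)))) < s * (RInt (gi s) a T - Gamma s)) by nra.
  apply Rabs_def1; unfold e3 in *; lra.
Qed.

Lemma gi_one t : 0 < t -> gi 1 t = exp (- t).
Proof. intros; unfold gi. replace (1 - 1) with 0 by ring. rewrite rpow_0r; ring. Qed.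

Lemma Gamma_one : Gamma 1 = 1.
Proof.
  rewrite Gamma_gi. apply IntR_plus_eq.
  intros eps Heps. exists (eps / 2). split; [lra|].
  exists (Rmax 1 (- ln (eps / 2))). intros a T Ha HT.
  pose proof (Rmax_l 1 (- ln (eps / 2))). pose proof (Rmax_r 1 (- ln (eps / 2))).
  rewrite Int_RInt by (apply pos_ex; try lra; intros; apply gi_cont; auto).
  rewrite (RInt_ext (V:=R_CompleteNormedModule) (gi 1) (fun t => exp (- t))).
  2:{ intros x Hx. apply gi_one. pose proof (Rmin_glb_lt a T 0 ltac:(lra) ltac:(lra)). lra. }
  rewrite (RInt_deriv (fun t => - exp (- t))).
  - pose proof (exp_ineq1_le (- a)).
    assert (exp (- a) <= 1) by (apply Rle_trans with (exp 0); [apply exp_le; lra|rewrite exp_0; lra]).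
    assert (exp (- T) < eps / 2).
    { rewrite <- (exp_ln (eps / 2)) by lra. apply exp_increasing. lra. }
    pose proof (exp_pos (- T)).
    apply Rabs_def1; lra.
  - intros x _. auto_derive; auto. ring.
  - intros x _. apply ex_derive_cont. auto_derive; auto.
Qed.

Lemma Gamma_CS s : 1 / 2 < s -> Gamma s ^ 2 <= Gamma (s - 1 / 2) * Gamma (s + 1 / 2).
Proof.
  intros Hs.
  assert (Hp1 := Gamma_pos s ltac:(lra)).
  assert (Hp2 := Gamma_pos (s - 1 / 2) ltac:(lra)).
  assert (Hp3 := Gamma_pos (s + 1 / 2) ltac:(lra)).
  set (l := Gamma (s + 1 / 2) / Gamma s).
  assert (Hl : 0 < l) by (unfold l; apply Rdiv_lt_0_compat; auto).
  assert (H := improper_le_comb (gi s) (gi (s - 1 / 2)) (gi (s + 1 / 2)) (Gamma s)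
    (Gamma (s - 1 / 2)) (Gamma (s + 1 / 2)) (l / 2) (/ (2 * l))
    ltac:(lra) ltac:(left; apply Rinv_0_lt_compat; lra)
    (proj1 (Gamma_spec s ltac:(lra))) (proj1 (Gamma_spec (s - 1 / 2) ltac:(lra)))
    (proj1 (Gamma_spec (s + 1 / 2) ltac:(lra)))).
  assert (Gamma s <= l / 2 * Gamma (s - 1 / 2) + / (2 * l) * Gamma (s + 1 / 2)).
  { apply H. intros a T Ha HT.
    assert (Hex : forall u, ex_RInt (gi u) a T) by (intros; apply pos_ex; try lra; intros; apply gi_cont; auto).
    rewrite !Int_RInt by auto.
    rewrite <- RInt_lin2 by auto.
    apply RInt_le; try lra; auto.
    - apply ex_RInt_lin2; auto.
    - intros t Ht. rewrite !gi_pos by lra.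
      set (A := Rpower t (s - 1 / 2 - 1)). set (B := Rpower t (s + 1 / 2 - 1)).
      set (C := Rpower t (s - 1)).
      assert (HAB : A * B = C * C).
      { unfold A, B, C. rewrite <- !Rpower_plus. f_equal. ring. }
      assert (HA : 0 < A) by apply Rpower_pos.
      assert (HE : 0 < exp (- t)) by apply exp_pos.
      assert (C <= l / 2 * A + / (2 * l) * B).
      { assert (Hsq : 0 <= (l * A - C) ^ 2) by apply pow2_ge_0.
        assert (l * l * A + B >= 2 * l * C).
        { assert (E : A * (l * l * A + B - 2 * l * C) = (l * A - C) ^ 2).
          { transitivity (l * l * A * A + A * B - 2 * l * A * C); [ring|rewrite HAB; ring]. }
          rewrite <- E in Hsq. nra. }
        apply Rmult_le_reg_l with (2 * l); [lra|].
        replace (2 * l * (l / 2 * A + / (2 * l) * B)) with (l * l * A + B) by (field; lra). lra. }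
      nra. }
  unfold l in H0.
  assert (Gamma s * Gamma s <= Gamma (s + 1 / 2) * Gamma (s - 1 / 2)).
  { apply Rmult_le_reg_l with (/ Gamma s); [apply Rinv_0_lt_compat; auto|].
    replace (/ Gamma s * (Gamma s * Gamma s)) with (Gamma s) by (field; lra).
    replace (Gamma (s + 1 / 2) / Gamma s / 2 * Gamma (s - 1 / 2) + / (2 * (Gamma (s + 1 / 2) / Gamma s)) * Gamma (s + 1 / 2))
      with (/ Gamma s * (Gamma (s + 1 / 2) * Gamma (s - 1 / 2)) / 2 + Gamma s / 2) in H0 by (field; lra).
    lra. }
  simpl. lra.
Qed.

Definition U (b : R) := RInt (fun s => rpow (4 * s * (1 - s)) (b - 1 / 2)) 0 1.

Lemma ui_cont q x : 0 <= q -> continuous (fun s => rpow (4 * s * (1 - s)) q) x.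
Proof.
  intros Hq.
  apply (continuous_comp (fun s => 4 * s * (1 - s)) (fun w => rpow w q)).
  - apply ex_derive_cont. auto_derive. auto.
  - apply cont_rpow; auto.
Qed.

Lemma ui_ex q a b : 0 <= q -> ex_RInt (fun s => rpow (4 * s * (1 - s)) q) a b.
Proof. intros; apply ex_RInt_cont; intros; apply ui_cont; auto. Qed.

Lemma rpow_le1 w q : 0 <= w <= 1 -> 0 <= q -> 0 <= rpow w q <= 1.
Proof.
  intros Hw Hq. destruct (Req_dec w 0) as [->|Hw0].
  - destruct (Req_dec q 0) as [->|Hq0]. rewrite rpow_0r; lra. rewrite rpow_nonpos; auto; lra.
  - rewrite rpow_pos by lra. split; [left; apply Rpower_pos|].
    unfold Rpower. rewrite <- exp_0. apply exp_le.
    assert (ln w <= 0) by (rewrite <- ln_1; apply ln_le; lra). nra.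
Qed.

Lemma w01 s : 0 <= s <= 1 -> 0 <= 4 * s * (1 - s) <= 1.
Proof. intros; split; [nra|]. pose proof (pow2_ge_0 (2 * s - 1)). nra. Qed.

Lemma U_half : U (1 / 2) = 1.
Proof.
  unfold U. rewrite (RInt_ext (V:=R_CompleteNormedModule) _ (fun _ => 1)).
  - rewrite (RInt_const (V:=R_CompleteNormedModule)). simpl. change (scal (1 - 0) 1) with ((1 - 0) * 1). ring.
  - intros. replace (1 / 2 - 1 / 2) with 0 by ring. apply rpow_0r.
Qed.

Lemma U_pos b : 1 / 2 <= b -> 0 < U b.
Proof.
  intros Hb. unfold U. apply RInt_gt_0; [lra| |intros; apply ui_cont; lra].
  intros x Hx. rewrite rpow_pos by nra. apply Rpower_pos.
Qed.

Lemma U_mono b1 b2 : 1 / 2 <= b1 -> b1 <= b2 -> U b2 <= U b1.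
Proof.
  intros H1 H2. unfold U. apply RInt_le; try lra; try (apply ui_ex; lra).
  intros x Hx. assert (Hw := w01 x ltac:(lra)).
  rewrite !rpow_pos by nra. unfold Rpower. apply exp_le.
  assert (ln (4 * x * (1 - x)) <= 0) by (rewrite <- ln_1; apply ln_le; nra). nra.
Qed.

Lemma small_zero X K : 0 < K -> (forall e, 0 < e < 1 / 4 -> Rabs X <= e * K) -> X = 0.
Proof.
  intros HK H. destruct (Req_dec X 0) as [|N]; auto. exfalso.
  assert (HX : 0 < Rabs X) by (apply Rabs_pos_lt; auto).
  set (e := Rmin (1 / 8) (Rabs X / (2 * K))).
  assert (He : 0 < e) by (apply Rmin_glb_lt; [lra|apply Rdiv_lt_0_compat; lra]).
  assert (H0 : e <= 1 / 8) by apply Rmin_l. assert (H1 : e <= Rabs X / (2 * K)) by apply Rmin_r.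
  assert (He2 : 0 < e < 1 / 4) by lra.
  specialize (H e He2).
  assert (e * K <= Rabs X / (2 * K) * K) by (apply Rmult_le_compat_r; lra).
  replace (Rabs X / (2 * K) * K) with (Rabs X / 2) in H2 by (field; lra). lra.
Qed.

Lemma U_rec b : 1 / 2 <= b -> U (b + 1) = (2 * b + 1) / (2 * b + 2) * U b.
Proof.
  intros Hb. set (p := b - 1 / 2). assert (Hp : 0 <= p) by (unfold p; lra).
  set (g := fun s => (2 * p + 3) * rpow (4 * s * (1 - s)) (p + 1) + (- (2 * (p + 1))) * rpow (4 * s * (1 - s)) p).
  assert (Hgc : forall x, continuous g x).
  { intros x. unfold g.
    apply (continuous_plus (K:=R_AbsRing) (V:=R_NormedModule) (fun s => (2 * p + 3) * rpow (4 * s * (1 - s)) (p + 1)) (fun s => (- (2 * (p + 1))) * rpow (4 * s * (1 - s)) p)).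
    - apply (continuous_mult (K:=R_AbsRing) (fun _ => 2 * p + 3)); [apply continuous_const|apply ui_cont; lra].
    - apply (continuous_mult (K:=R_AbsRing) (fun _ => - (2 * (p + 1)))); [apply continuous_const|apply ui_cont; lra]. }
  assert (Hgex : forall a c, ex_RInt g a c) by (intros; apply ex_RInt_cont; auto).
  assert (HX : RInt g 0 1 = (2 * p + 3) * U (b + 1) + (- (2 * (p + 1))) * U b).
  { unfold g, U. rewrite RInt_lin2 by (apply ui_ex; lra).
    replace (b + 1 - 1 / 2) with (p + 1) by (unfold p; ring). reflexivity. }
  set (Mg := (2 * p + 3) + 2 * (p + 1)).
  assert (Hgb : forall t, 0 <= t <= 1 -> Rabs (g t) <= Mg).
  { intros t Ht. unfold g, Mg. assert (Hw := w01 t Ht).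
    pose proof (rpow_le1 _ (p + 1) Hw ltac:(lra)). pose proof (rpow_le1 _ p Hw ltac:(lra)).
    apply Rabs_le. split; nra. }
  assert (H0 : RInt g 0 1 = 0).
  { apply (small_zero _ (2 * Mg + 4)); [unfold Mg; lra|].
    intros e He.
    rewrite (RInt_split3 g 0 e (1 - e) 1) by auto.
    assert (H1 : Rabs (RInt g 0 e) <= (e - 0) * Mg) by (apply abs_RInt_le_const; auto; try lra; intros; apply Hgb; lra).
    assert (H2 : Rabs (RInt g (1 - e) 1) <= (1 - (1 - e)) * Mg) by (apply abs_RInt_le_const; auto; try lra; intros; apply Hgb; lra).
    rewrite (RInt_deriv (fun s => (s - 1 / 2) * Rpower (4 * s * (1 - s)) (p + 1)) g e (1 - e)).
    - replace (4 * (1 - e) * (1 - (1 - e))) with (4 * e * (1 - e)) by ring.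
      set (w := 4 * e * (1 - e)).
      assert (Hw : 0 < w <= 4 * e) by (unfold w; nra).
      assert (HW : Rpower w (p + 1) <= w).
      { rewrite Rpower_plus, Rpower_1 by lra.
        assert (Hw1 := w01 e ltac:(lra)). fold w in Hw1.
        pose proof (rpow_le1 w p Hw1 Hp). rewrite rpow_pos in H by lra. nra. }
      pose proof (Rpower_pos w (p + 1)).
      replace ((1 - e - 1 / 2) * Rpower w (p + 1) - (e - 1 / 2) * Rpower w (p + 1)) with ((1 - 2 * e) * Rpower w (p + 1)) by ring.
      assert (0 <= (1 - 2 * e) * Rpower w (p + 1) <= 4 * e) by nra.
      apply Rle_trans with (Rabs (RInt g 0 e) + Rabs ((1 - 2 * e) * Rpower w (p + 1)) + Rabs (RInt g (1 - e) 1)).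
      + eapply Rle_trans; [apply Rabs_triang|]. apply Rplus_le_compat_r. apply Rabs_triang.
      + rewrite (Rabs_pos_eq ((1 - 2 * e) * Rpower w (p + 1))) by lra. lra.
    - intros x Hx. rewrite Rmin_left, Rmax_right in Hx by lra.
      assert (Hwx : 0 < 4 * x * (1 - x)) by nra.
      unfold g. rewrite !rpow_pos by auto. unfold Rpower.
      auto_derive; auto.
      replace (1 + - x) with (1 - x) by ring.
      replace (exp ((p + 1) * ln (4 * x * (1 - x)))) with (exp (p * ln (4 * x * (1 - x))) * (4 * x * (1 - x))).
      + set (E0 := exp _). field. split; lra.
      + replace ((p + 1) * ln (4 * x * (1 - x))) with (p * ln (4 * x * (1 - x)) + ln (4 * x * (1 - x))) by ring.
        rewrite exp_plus, exp_ln by auto. reflexivity.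
    - intros; apply Hgc. }
  rewrite HX in H0. unfold p in H0.
  change (U (b + 1) = (2 * b + 1) / (2 * b + 2) * U b).
  apply Rmult_eq_reg_l with (2 * b + 2); [|lra].
  rewrite <- Rmult_assoc.
  replace ((2 * b + 2) * ((2 * b + 1) / (2 * b + 2))) with (2 * b + 1) by (field; lra).
  nra.
Qed.

Definition Rf a := 2 * Gamma (a + 1) * U a / Gamma (a + 1 / 2).

Lemma Rf_per a : 1 / 2 <= a -> Rf (a + 1) = Rf a.
Proof.
  intros Ha. unfold Rf.
  rewrite (Gamma_rec (a + 1)) by lra.
  replace (a + 1 + 1 / 2) with (a + 1 / 2 + 1) by ring.
  rewrite (Gamma_rec (a + 1 / 2)) by lra.
  rewrite U_rec by lra.
  pose proof (Gamma_pos (a + 1 / 2) ltac:(lra)).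
  field. lra.
Qed.

Lemma Rf_perk a k : 1 / 2 <= a -> Rf (a + INR k) = Rf a.
Proof.
  intros Ha. induction k.
  - simpl. f_equal. ring.
  - rewrite S_INR. replace (a + (INR k + 1)) with (a + INR k + 1) by ring.
    rewrite Rf_per; auto. pose proof (pos_INR k). lra.
Qed.

Lemma Rf_half : Rf (1 / 2) = Gamma (1 / 2).
Proof.
  unfold Rf. rewrite Gamma_rec by lra. rewrite U_half.
  replace (1 / 2 + 1 / 2) with 1 by field. rewrite Gamma_one. field.
Qed.

Lemma Gr_bounds y : 1 / 2 <= y ->
  y * Gamma (y + 1 / 2) ^ 2 <= Gamma (y + 1) ^ 2 <= (y + 1 / 2) * Gamma (y + 1 / 2) ^ 2.
Proof.
  intros Hy. split.
  - pose proof (Gamma_CS (y + 1 / 2) ltac:(lra)).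
    replace (y + 1 / 2 - 1 / 2) with y in H by field.
    replace (y + 1 / 2 + 1 / 2) with (y + 1) in H by field.
    rewrite (Gamma_rec y) by lra. rewrite (Gamma_rec y) in H by lra.
    pose proof (Gamma_pos y ltac:(lra)). simpl in *. nra.
  - pose proof (Gamma_CS (y + 1) ltac:(lra)).
    replace (y + 1 - 1 / 2) with (y + 1 / 2) in H by field.
    replace (y + 1 + 1 / 2) with (y + 1 / 2 + 1) in H by field.
    rewrite (Gamma_rec (y + 1 / 2)) in H by lra. simpl in *. nra.
Qed.

Lemma U_lower b N : 1 / 2 <= b -> ((2 * b + 1) / (2 * b + 2)) ^ N * U b <= U (b + INR N).
Proof.
  intros Hb. set (r := (2 * b + 1) / (2 * b + 2)).
  assert (Hr : 0 < r <= 1) by (unfold r; split; [apply Rdiv_lt_0_compat; lra| apply Rmult_le_reg_r with (2 * b + 2); [lra|]; field_simplify; lra]).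
  induction N.
  - simpl. rewrite Rplus_0_r. lra.
  - rewrite S_INR. replace (b + (INR N + 1)) with (b + INR N + 1) by ring.
    pose proof (pos_INR N).
    rewrite U_rec by lra.
    assert (r <= (2 * (b + INR N) + 1) / (2 * (b + INR N) + 2)).
    { unfold r. apply Rmult_le_reg_r with ((2 * b + 2) * (2 * (b + INR N) + 2)); [nra|].
      field_simplify; nra. }
    pose proof (U_pos b Hb).
    assert (0 <= r ^ N * U b) by (apply Rmult_le_pos; [apply pow_le; lra|lra]).
    simpl. nra.
Qed.

Lemma bernoulli r n : 0 <= r <= 1 -> 1 - INR n * (1 - r) <= r ^ n.
Proof.
  intros Hr. induction n.
  - simpl; lra.
  - rewrite S_INR. simpl. pose proof (pos_INR n).
    assert (r * (1 - INR n * (1 - r)) <= r * r ^ n) by (apply Rmult_le_compat_l; lra).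
    assert (0 <= INR n * ((1 - r) * (1 - r))) by (apply Rmult_le_pos; nra).
    nra.
Qed.

Lemma Rf_bounds a N k : 1 / 2 <= a -> a - 1 / 2 <= INR N ->
  let r2 := (Rf a / Gamma (1 / 2)) ^ 2 in
  (r2 - 1) * (INR k + 1 / 2) <= a /\ (1 - r2) * (2 * INR k + 2) <= 2 * INR N + 1.
Proof.
  intros Ha HN r2.
  pose proof (pos_INR k) as Hk.
  set (y := a + INR k). set (b := 1 / 2 + INR k).
  assert (Hy : 1 / 2 <= y) by (unfold y; lra). assert (Hb : 1 / 2 <= b) by (unfold b; lra).
  assert (E1 : Rf y = Rf a) by (apply Rf_perk; auto).
  assert (E2 : Rf b = Gamma (1 / 2)) by (unfold b; rewrite Rf_perk by lra; apply Rf_half).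
  assert (Hr : Rf a / Gamma (1 / 2) = Rf y / Rf b) by (rewrite E1, E2; auto).
  unfold r2; rewrite Hr; clear Hr E1 E2 r2.
  set (A1 := Gamma (y + 1)). set (B1 := Gamma (y + 1 / 2)).
  set (A2 := Gamma (b + 1)). set (B2 := Gamma (b + 1 / 2)).
  set (u1 := U y). set (u2 := U b).
  assert (PA1 : 0 < A1) by (apply Gamma_pos; lra). assert (PB1 : 0 < B1) by (apply Gamma_pos; lra).
  assert (PA2 : 0 < A2) by (apply Gamma_pos; lra). assert (PB2 : 0 < B2) by (apply Gamma_pos; lra).
  assert (Pu1 : 0 < u1) by (apply U_pos; lra). assert (Pu2 : 0 < u2) by (apply U_pos; lra).
  set (X := A1 ^ 2 / B1 ^ 2). set (Y := A2 ^ 2 / B2 ^ 2). set (Z := u1 / u2).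
  assert (Eq : (Rf y / Rf b) ^ 2 = X / Y * Z ^ 2).
  { unfold Rf, X, Y, Z. fold A1 B1 A2 B2 u1 u2. field. lra. }
  rewrite Eq; clear Eq.
  destruct (Gr_bounds y Hy) as [G1 G2]. fold A1 B1 in G1, G2.
  destruct (Gr_bounds b Hb) as [G3 G4]. fold A2 B2 in G3, G4.
  assert (HB1 : 0 < B1 ^ 2) by (apply pow_lt; auto).
  assert (HB2 : 0 < B2 ^ 2) by (apply pow_lt; auto).
  assert (HX : y <= X <= y + 1 / 2).
  { unfold X; split; [apply Rmult_le_reg_r with (B1 ^ 2)|apply Rmult_le_reg_r with (B1 ^ 2)]; auto;
    field_simplify; lra. }
  assert (HY : b <= Y <= b + 1 / 2).
  { unfold Y; split; [apply Rmult_le_reg_r with (B2 ^ 2)|apply Rmult_le_reg_r with (B2 ^ 2)]; auto;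
    field_simplify; lra. }
  assert (HZ1 : Z <= 1).
  { unfold Z. apply Rmult_le_reg_r with u2; auto. field_simplify; [|lra].
    unfold u1, u2. apply U_mono; unfold y, b; lra. }
  set (rho := (2 * b + 1) / (2 * b + 2)).
  assert (HZ2 : rho ^ N <= Z).
  { unfold Z. apply Rmult_le_reg_r with u2; auto. field_simplify; [|lra].
    apply Rle_trans with (U (b + INR N)); [apply U_lower; auto|].
    unfold u1. apply U_mono; unfold y, b in *; lra. }
  assert (HZ0 : 0 < Z) by (unfold Z; apply Rdiv_lt_0_compat; auto).
  assert (HYp : 0 < Y) by lra.
  split.
  - assert (X / Y * Z ^ 2 <= (y + 1 / 2) / b).
    { apply Rle_trans with (X / Y).
      - assert (Z ^ 2 <= 1) by (simpl; nra).
        assert (0 < X / Y) by (apply Rdiv_lt_0_compat; lra). nra.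
      - unfold Rdiv. apply Rmult_le_compat; try lra.
        + left; apply Rinv_0_lt_compat; lra.
        + apply Rinv_le_contravar; lra. }
    assert (X / Y * Z ^ 2 * b <= y + 1 / 2).
    { apply Rmult_le_reg_r with (/ b); [apply Rinv_0_lt_compat; lra|].
      replace (X / Y * Z ^ 2 * b * / b) with (X / Y * Z ^ 2) by (field; lra). exact H. }
    unfold y, b in *. nra.
  - set (rho0 := b / (b + 1 / 2)).
    assert (Hr0 : 0 <= rho0 <= 1) by (unfold rho0; split; [left; apply Rdiv_lt_0_compat; lra|apply Rmult_le_reg_r with (b + 1 / 2); [lra|]; field_simplify; lra]).
    assert (Hrr : rho0 <= rho).
    { unfold rho0, rho. apply Rmult_le_reg_r with ((b + 1 / 2) * (2 * b + 2)); [nra|]. field_simplify; nra. }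
    assert (H1 : rho0 <= X / Y).
    { unfold rho0. apply Rmult_le_reg_r with ((b + 1 / 2) * Y); [nra|].
      replace (X / Y * ((b + 1 / 2) * Y)) with (X * (b + 1 / 2)) by (field; lra).
      replace (b / (b + 1 / 2) * ((b + 1 / 2) * Y)) with (b * Y) by (field; lra).
      unfold y, b in *. nra. }
    assert (H2 : rho0 ^ N <= Z).
    { apply Rle_trans with (rho ^ N); auto. apply pow_incr; lra. }
    assert (H3 : rho0 ^ N * rho0 ^ N <= Z ^ 2).
    { assert (0 <= rho0 ^ N) by (apply pow_le; lra). simpl. nra. }
    assert (H4 : rho0 ^ (2 * N + 1) <= X / Y * Z ^ 2).
    { replace (2 * N + 1)%nat with (S (N + N)) by lia. simpl pow. rewrite pow_add.
      assert (0 <= rho0 ^ N) by (apply pow_le; lra). nra. }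
    pose proof (bernoulli rho0 (2 * N + 1) Hr0).
    rewrite plus_INR, mult_INR in H. simpl INR in H.
    assert (1 - rho0 = / (2 * INR k + 2)) by (unfold rho0, b; field; lra).
    rewrite H0 in H.
    assert (Hk2 : 0 < 2 * INR k + 2) by lra.
    assert ((1 - X / Y * Z ^ 2) <= (2 * INR N + 1) * / (2 * INR k + 2)) by lra.
    apply Rmult_le_compat_r with (r := 2 * INR k + 2) in H5; [|lra].
    replace ((2 * INR N + 1) * / (2 * INR k + 2) * (2 * INR k + 2)) with (2 * INR N + 1) in H5 by (field; lra).
    exact H5.
Qed.

Lemma Rf_const a : 1 / 2 <= a -> Rf a = Gamma (1 / 2).
Proof.
  intros Ha.
  destruct (INR_unbounded a) as [N HN].
  set (r2 := (Rf a / Gamma (1 / 2)) ^ 2).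
  assert (HB : forall k, (r2 - 1) * (INR k + 1 / 2) <= a /\ (1 - r2) * (2 * INR k + 2) <= 2 * INR N + 1)
    by (intros k; apply Rf_bounds; lra).
  assert (Hr2 : r2 = 1).
  { destruct (Rtotal_order r2 1) as [Hl|[He|Hg]]; auto; exfalso.
    - destruct (INR_unbounded ((2 * INR N + 1) / (1 - r2))) as [k Hk].
      destruct (HB k) as [_ H].
      assert ((2 * INR N + 1) / (1 - r2) * (1 - r2) < INR k * (1 - r2)) by (apply Rmult_lt_compat_r; lra).
      replace ((2 * INR N + 1) / (1 - r2) * (1 - r2)) with (2 * INR N + 1) in H0 by (field; lra).
      pose proof (pos_INR k). nra.
    - destruct (INR_unbounded (a / (r2 - 1))) as [k Hk].
      destruct (HB k) as [H _].
      assert (a / (r2 - 1) * (r2 - 1) < INR k * (r2 - 1)) by (apply Rmult_lt_compat_r; lra).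
      replace (a / (r2 - 1) * (r2 - 1)) with a in H0 by (field; lra).
      pose proof (pos_INR k). nra. }
  assert (HG : 0 < Gamma (1 / 2)) by (apply Gamma_pos; lra).
  assert (HR : 0 < Rf a).
  { unfold Rf. pose proof (Gamma_pos (a + 1) ltac:(lra)). pose proof (Gamma_pos (a + 1 / 2) ltac:(lra)).
    pose proof (U_pos a Ha). apply Rdiv_lt_0_compat; [|lra]. nra. }
  assert (Hq : Rf a / Gamma (1 / 2) = 1).
  { assert (0 < Rf a / Gamma (1 / 2)) by (apply Rdiv_lt_0_compat; auto).
    unfold r2 in Hr2. simpl in Hr2. nra. }
  apply Rmult_eq_reg_r with (/ Gamma (1 / 2)); [|apply Rinv_neq_0_compat; lra].
  rewrite Rinv_r by lra. exact Hq.
Qed.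

Lemma kernel_const a : 1 / 2 <= a -> CGamma a * Rpower 2 (2 * a) * U a = 1.
Proof.
  intros Ha. pose proof (Rf_const a Ha) as H. unfold Rf in H. unfold CGamma.
  rewrite rpow_pos by lra.
  assert (E : Rpower 2 ((2 * a - 1) + 1) = Rpower 2 (2 * a - 1) * 2) by (rewrite Rpower_plus, Rpower_1; lra).
  replace ((2 * a - 1) + 1) with (2 * a) in E by ring. rewrite E.
  pose proof (Rpower_pos 2 (2 * a - 1)).
  pose proof (Gamma_pos (a + 1 / 2) ltac:(lra)).
  pose proof (Gamma_pos (1 / 2) ltac:(lra)).
  pose proof (U_pos a Ha). pose proof (Gamma_pos (a + 1) ltac:(lra)). rewrite <- H. field. repeat split; lra.
Qed.

Lemma rpow_scal k w q : 0 < k -> 0 <= q -> rpow (k * w) q = Rpower k q * rpow w q.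
Proof.
  intros Hk Hq. destruct (Rlt_dec 0 w) as [Hw|Hw].
  - rewrite !rpow_pos by nra. symmetry; apply Rpower_mult_distr; auto.
  - destruct (Req_dec q 0) as [->|Hq0].
    + rewrite !rpow_0r, Rpower_O by auto; try ring.
    + rewrite !rpow_nonpos; auto; try nra; try ring.
Qed.

Lemma Rpower_sq t q : 0 < t -> Rpower (t ^ 2) q = Rpower t (2 * q).
Proof.
  intros Ht. rewrite <- (Rpower_pow 2 t Ht). rewrite Rpower_mult. f_equal; simpl; ring.
Qed.

Lemma kernel_int al x y (f : R -> R) : 1 / 2 <= al -> 0 < x -> 0 < y ->
  (forall z, Rabs (x - y) <= z <= x + y -> f z = 1) ->
  Int (fun z => Kker al x y z * f z * rpow z (2 * al + 1)) (Rabs (x - y)) (x + y)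
  = CGamma al * Rpower 2 (2 * al) * U al.
Proof.
  intros Hal Hx Hy Hf.
  set (c := CGamma al / Rpower (x * y) (2 * al)).
  set (F := fun u => rpow ((u - (x - y) ^ 2) * ((x + y) ^ 2 - u)) (al - 1 / 2)).
  set (h := fun z => c / 2 * (2 * z * F (z ^ 2))).
  assert (HFc : forall u, continuous F u).
  { intros u. unfold F.
    apply (continuous_comp (fun u => (u - (x - y) ^ 2) * ((x + y) ^ 2 - u)) (fun w => rpow w (al - 1 / 2))).
    - apply ex_derive_cont. auto_derive. auto.
    - apply cont_rpow; lra. }
  assert (Hhc : forall z, continuous h z).
  { intros z. unfold h.
    apply (continuous_mult (K:=R_AbsRing) (fun _ => c / 2)); [apply continuous_const|].
    apply (continuous_mult (K:=R_AbsRing) (fun z => 2 * z)).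
    - apply ex_derive_cont; auto_derive; auto.
    - apply (continuous_comp (fun z => z ^ 2) F); [apply ex_derive_cont; auto_derive; auto|apply HFc]. }
  assert (Hab : Rabs (x - y) <= x + y) by (apply Rabs_le; lra).
  assert (Hpt : forall z, Rabs (x - y) <= z <= x + y ->
            Kker al x y z * f z * rpow z (2 * al + 1) = h z).
  { intros z Hz. rewrite Hf by auto. unfold h, F, c, Kker.
    assert (Hz0 : 0 <= z) by (pose proof (Rabs_pos (x - y)); lra).
    destruct (Req_dec z 0) as [->|Hz1].
    - rewrite (rpow_nonpos 0 (2 * al + 1)) by lra. ring.
    - assert (Hzp : 0 < z) by lra.
      rewrite (rpow_pos (x * y * z)) by (apply Rmult_lt_0_compat; [apply Rmult_lt_0_compat|]; auto).
      rewrite (rpow_pos z) by auto.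
      rewrite <- Rpower_mult_distr by (try apply Rmult_lt_0_compat; auto).
      replace (2 * al + 1) with (2 * al + 1) by ring.
      rewrite Rpower_plus, Rpower_1 by auto.
      pose proof (Rpower_pos (x * y) (2 * al)). pose proof (Rpower_pos z (2 * al)).
      replace (z ^ 2) with (z ^ 2) by ring.
      field. split; lra. }
  assert (Hexh : ex_RInt h (Rabs (x - y)) (x + y)) by (apply ex_RInt_cont; intros; apply Hhc).
  rewrite Int_RInt.
  2:{ apply (ex_RInt_ext (V:=R_NormedModule) h). intros z Hz.
      rewrite Rmin_left, Rmax_right in Hz by auto. symmetry; apply Hpt; lra. exact Hexh. }
  rewrite (RInt_ext (V:=R_CompleteNormedModule) _ h).
  2:{ intros z Hz. rewrite Rmin_left, Rmax_right in Hz by auto. apply Hpt; lra. }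
  unfold h. rewrite (RInt_scal (V:=R_CompleteNormedModule) (fun z => 2 * z * F (z ^ 2))).
  2:{ apply ex_RInt_cont. intros z _.
      apply (continuous_mult (K:=R_AbsRing) (fun z => 2 * z)).
      - apply ex_derive_cont; auto_derive; auto.
      - apply (continuous_comp (fun z => z ^ 2) F); [apply ex_derive_cont; auto_derive; auto|apply HFc]. }
  assert (E1 := RInt_comp (V:=R_CompleteNormedModule) F (fun z => z ^ 2) (fun z => 2 * z) (Rabs (x - y)) (x + y)).
  specialize (E1 (fun _ _ => HFc _)).
  assert (E1' : forall z, Rmin (Rabs (x - y)) (x + y) <= z <= Rmax (Rabs (x - y)) (x + y) ->
     is_derive (fun z : R => z ^ 2) z ((fun z : R => 2 * z) z) /\ continuous (fun z : R => 2 * z) z).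
  { intros z _. split. auto_derive; auto; ring. apply ex_derive_cont; auto_derive; auto. }
  specialize (E1 E1'). clear E1'. cbv beta in E1. rewrite pow2_abs in E1.
  change (RInt (fun y0 => 2 * y0 * F (y0 ^ 2)) (Rabs (x - y)) (x + y) = RInt F ((x - y) ^ 2) ((x + y) ^ 2)) in E1.
  rewrite E1.
  assert (E2 := RInt_comp_lin (V:=R_CompleteNormedModule) F (4 * x * y) ((x - y) ^ 2) 0 1).
  replace (4 * x * y * 0 + (x - y) ^ 2) with ((x - y) ^ 2) in E2 by ring.
  replace (4 * x * y * 1 + (x - y) ^ 2) with ((x + y) ^ 2) in E2 by ring.
  set (u := 4 * x * y) in *. set (v := (x - y) ^ 2) in *.
  rewrite <- E2 by (apply ex_RInt_cont; intros; apply HFc).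
  change (scal (c / 2) (RInt (fun s => u * F (u * s + v)) 0 1) = CGamma al * Rpower 2 (2 * al) * U al).
  rewrite (RInt_ext (V:=R_CompleteNormedModule) _ (fun s => (u * Rpower ((2 * x * y) ^ 2) (al - 1 / 2)) * rpow (4 * s * (1 - s)) (al - 1 / 2))).
  2:{ intros s _. unfold F. rewrite Rmult_assoc. f_equal.
      rewrite <- rpow_scal by (try apply pow_lt; try nra; lra). f_equal. unfold u, v. ring. }
  rewrite (RInt_scal (V:=R_CompleteNormedModule) (fun s => rpow (4 * s * (1 - s)) (al - 1 / 2))) by (apply ui_ex; lra).
  change (c / 2 * (u * Rpower ((2 * x * y) ^ 2) (al - 1 / 2) * U al) = CGamma al * Rpower 2 (2 * al) * U al).
  rewrite Rpower_sq by nra.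
  unfold c, u.
  assert (E3 : 2 * x * y * Rpower (2 * x * y) (2 * (al - 1 / 2)) = Rpower 2 (2 * al) * Rpower (x * y) (2 * al)).
  { rewrite Rpower_mult_distr by nra.
    replace (2 * (x * y)) with (2 * x * y) by ring.
    rewrite <- (Rpower_1 (2 * x * y)) at 1 by nra. rewrite <- Rpower_plus. f_equal. field. }
  pose proof (Rpower_pos (x * y) (2 * al)).
  replace (CGamma al / Rpower (x * y) (2 * al) / 2 * (4 * x * y * Rpower (2 * x * y) (2 * (al - 1 / 2)) * U al))
    with (CGamma al / Rpower (x * y) (2 * al) * (2 * x * y * Rpower (2 * x * y) (2 * (al - 1 / 2))) * U al) by (field; lra).
  rewrite E3. field. lra.
Qed.

Lemma ind_cc_1 a b z : a <= z <= b -> ind_cc a b z = 1.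
Proof. intros; unfold ind_cc; destruct Rle_dec; [destruct Rle_dec|]; lra. Qed.

Lemma conv_one al f2 x : 1 / 2 <= al -> 0 <= x ->
  (forall y, 0 < y < 1 -> (x = 0 -> f2 y = 1) /\
     (0 < x -> forall z, Rabs (x - y) <= z <= x + y -> f2 z = 1)) ->
  conv al (fun y => / omega1 al * ind_co 0 1 y) f2 x = 1.
Proof.
  intros Hal Hx Hf.
  set (pw := fun y => rpow y (2 * al + 1)).
  assert (Hpc : forall y, continuous pw y) by (intros; apply cont_rpow; lra).
  assert (Hpex : forall a b, ex_RInt pw a b) by (intros; apply ex_RInt_cont; auto).
  assert (Hw : omega1 al = RInt pw 0 1) by (unfold omega1; apply Int_RInt; apply Hpex).
  assert (Hwp : 0 < omega1 al).
  { rewrite Hw. apply RInt_gt_0; [lra| |auto].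
    intros y Hy. unfold pw. rewrite rpow_pos by lra. apply Rpower_pos. }
  assert (Htau : forall y, 0 < y < 1 -> tau al f2 x y = 1).
  { intros y Hy. unfold tau. destruct (Req_dec_T x 0) as [Hx0|Hx0].
    - apply (proj1 (Hf y Hy)); auto.
    - destruct (Req_dec_T y 0) as [|_]; [lra|].
      rewrite kernel_int; auto; try lra.
      + apply kernel_const; auto.
      + apply (proj2 (Hf y Hy)). lra. }
  unfold conv. apply IntR_plus_eq.
  set (Fn := fun y => / omega1 al * ind_co 0 1 y * tau al f2 x y * rpow y (2 * al + 1)).
  assert (HF1 : forall y, 0 < y < 1 -> Fn y = / omega1 al * pw y).
  { intros y Hy. unfold Fn, pw. rewrite Htau by auto.
    unfold ind_co. destruct Rle_dec; [destruct Rlt_dec|]; try lra; ring. }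
  assert (HF2 : forall y, 1 <= y -> Fn y = 0).
  { intros y Hy. unfold Fn. unfold ind_co. destruct Rle_dec; [destruct Rlt_dec|]; try lra; ring. }
  intros eps Heps.
  exists (Rmin 1 (eps * omega1 al)). split.
  { apply Rmin_glb_lt; [lra|nra]. }
  exists 1. intros a T Ha HT.
  assert (Hd1 : a < 1) by (pose proof (Rmin_l 1 (eps * omega1 al)); lra).
  assert (Hd2 : a < eps * omega1 al) by (pose proof (Rmin_r 1 (eps * omega1 al)); lra).
  assert (Ex1 : ex_RInt Fn a 1).
  { apply (ex_RInt_ext (V:=R_NormedModule) (fun y => / omega1 al * pw y)).
    - intros y Hy. rewrite Rmin_left, Rmax_right in Hy by lra. symmetry; apply HF1; lra.
    - apply (ex_RInt_scal (V:=R_NormedModule) pw); auto. }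
  assert (Ex2 : ex_RInt Fn 1 T).
  { apply (ex_RInt_ext (V:=R_NormedModule) (fun _ => 0)).
    - intros y Hy. rewrite Rmin_left, Rmax_right in Hy by lra. symmetry; apply HF2; lra.
    - apply (ex_RInt_const (V:=R_NormedModule)). }
  rewrite Int_RInt by (eapply ex_RInt_Chasles; eauto).
  rewrite <- (RInt_Chasles_R Fn a 1 T) by auto.
  rewrite (RInt_ext (V:=R_CompleteNormedModule) Fn (fun _ => 0) 1 T).
  2:{ intros y Hy. rewrite Rmin_left, Rmax_right in Hy by lra. apply HF2; lra. }
  rewrite (RInt_ext (V:=R_CompleteNormedModule) Fn (fun y => / omega1 al * pw y) a 1).
  2:{ intros y Hy. rewrite Rmin_left, Rmax_right in Hy by lra. apply HF1; lra. }
  rewrite (RInt_scal (V:=R_CompleteNormedModule) pw) by auto.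
  rewrite (RInt_const (V:=R_CompleteNormedModule)).
  change (/ omega1 al * RInt pw a 1 + (T - 1) * 0 - 1 < eps) with (/ omega1 al * RInt pw a 1 + (T - 1) * 0 - 1 < eps).
  assert (Hc : RInt pw 0 a + RInt pw a 1 = omega1 al) by (rewrite Hw; apply RInt_Chasles_R; auto).
  assert (Hb : Rabs (RInt pw 0 a) <= (a - 0) * 1).
  { apply abs_RInt_le_const; auto; try lra. intros t Ht.
    unfold pw. pose proof (rpow_le1 t (2 * al + 1) ltac:(lra) ltac:(lra)). rewrite Rabs_pos_eq; lra. }
  change (Rabs (/ omega1 al * RInt pw a 1 + (T - 1) * 0 - 1) < eps).
  replace (/ omega1 al * RInt pw a 1 + (T - 1) * 0 - 1) with (- (RInt pw 0 a / omega1 al)) by (rewrite <- Hc; field; lra).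
  rewrite Rabs_Ropp. unfold Rdiv. rewrite Rabs_mult, (Rabs_pos_eq (/ omega1 al)) by (left; apply Rinv_0_lt_compat; auto).
  apply Rle_lt_trans with (a * / omega1 al).
  - apply Rmult_le_compat_r; [left; apply Rinv_0_lt_compat; auto|lra].
  - apply Rmult_lt_reg_r with (omega1 al); auto. field_simplify; lra.
Qed.

Theorem mainTheorem11 (alpha : R) (halpha : 1/2 <= alpha) (n : nat) (hn : (1 <= n)%nat)
  (x : R) (hx : INR n - 1 <= x < INR n) :
  g alpha n x = 1.
Proof.
  destruct n as [|[|n]]; [lia| |].
  - simpl in hx. simpl g. apply conv_one; try lra.
    intros y Hy. split.
    + intros _. apply ind_cc_1; lra.
    + intros _ z Hz. apply ind_cc_1. pose proof (Rabs_pos (x - y)). lra.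
  - assert (H2 : 2 <= INR (S (S n))) by (rewrite !S_INR; pose proof (pos_INR n); lra).
    change (g alpha (S (S n)) x) with
      (conv alpha (fun y => / omega1 alpha * ind_co 0 1 y) (ind_cc (INR (S (S n)) - 2) (INR (S (S n)) + 1)) x).
    apply conv_one; try lra.
    intros y Hy. split.
    + intros; lra.
    + intros _ z Hz. apply ind_cc_1.
      assert (x - y <= Rabs (x - y)) by apply RRle_abs. lra.
Qed.
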